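(* Let $\mathcal{M}$ be a discounted Markov decision process with finite state space $\mathcal{S}$, action space $\mathcal{A}$, transition kernel $P(s'|s,a)$, cost function $c(s,a)$ and discount factor $\gamma\in[0,1)$, and let $\hat{\mathcal{M}}$ be an MDP on the same state and action spaces with transition kernel $\hat P$ and cost $\hat c$ such that for all $(s,a)$, $\|\hat P(\cdot|s,a)-P(\cdot|s,a)\|_1\le\alpha$ and $|\hat c(s,a)-c(s,a)|\le\alpha$. Let $\pi^*$ be an optimal (cost-minimizing) policy on $\mathcal{M}$ with value function $V^{\pi^*}_{\mathcal{M}}(s)=\mathbb{E}\left[\sum_{t\ge0}\gamma^t c(s_t,a_t)\mid s_0=s\right]$, and let $V_{\min}\le V^{\pi^*}_{\mathcal{M}}\le V_{\max}$ and $c_{\min}\le c\le c_{\max}$. For a horizon $H\ge1$, a policy $\pi$, a terminal function $V$ and an MDP $\mathcal{N}$ with cost $c_{\mathcal{N}}$, define for each start state $s_0$ $$J^{\pi}_{\mathcal{N},V,H}(s_0)=\mathbb{E}_{\pi,\mathcal{N}}\left[\sum_{i=0}^{H-1}\gamma^i c_{\mathcal{N}}(s_i,a_i)+\gamma^H V(s_H)\right],$$ where the expectation is over trajectories obtained by executing $\pi$ in $\mathcal{N}$ from $s_0$. Then for any policy $\pi$, $$\left\|J^{\pi}_{\mathcal{M},V^{\pi^*}_{\mathcal{M}},H}-J^{\pi}_{\hat{\mathcal{M}},V^{\pi^*}_{\mathcal{M}},H}\right\|_\infty\le\gamma\frac{1-\gamma^{H-1}}{1-\gamma}\,\alpha H\,\frac{c_{\max}-c_{\min}}{2}+\gamma^H\alpha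 H\,\frac{V_{\max}-V_{\min}}{2}+\frac{1-\gamma^H}{1-\gamma}\alpha,$$ where the $\infty$-norm is taken over the start state $s_0$.
   Context: Costs are minimized. In $J^{\pi}_{\mathcal{M},\cdot,H}$ the running cost is $c$ and transitions follow $P$; in $J^{\pi}_{\hat{\mathcal{M}},\cdot,H}$ the running cost is $\hat c$ and transitions follow $\hat P$; in both the terminal cost is the true optimal value function $V^{\pi^*}_{\mathcal{M}}$. *)

(* Defs.v *)
From mathcomp Require Import all_boot all_order all_algebra.
From mathcomp Require Import all_classical all_reals all_analysis.
Set Implicit Arguments. Unset Strict Implicit. Unset Printing Implicit Defensive.
Import Order.TTheory GRing.Theory Num.Theory numFieldNormedType.Exports.
Local Open Scope ring_scope.

Section MDP.
Variables (R : realType) (S A : finType).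

Definition is_kernel (P : S -> A -> S -> R) : Prop :=
  forall s a, (forall s', 0 <= P s a s') /\ \sum_(s' : S) P s a s' = 1.

(* A (general, possibly stochastic and history-dependent) policy:
   pi h s a = probability of action a in current state s after history h
   (the list of past state-action pairs). *)
Definition policy := seq (S * A) -> S -> A -> R.

Definition is_policy (pi : policy) : Prop :=
  forall h s, (forall a, 0 <= pi h s a) /\ \sum_(a : A) pi h s a = 1.

(* Expected discounted cost of running pi for n more steps from current state s
   with history h, with terminal cost V:
   E[ sum_{i<n} gamma^i c(s_i,a_i) + gamma^n V(s_n) ]. *)
Fixpoint Jrec (P : S -> A -> S -> R) (c : S -> A -> R) (gamma : R) (V : S -> R)
    (pi : policy) (n : nat) (h : seq (S * A)) (s : S) : R :=
  match n with
  | 0 => V s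
  | n'.+1 => \sum_(a : A) pi h s a *
       (c s a + gamma * \sum_(s' : S) P s a s' * Jrec P c gamma V pi n' (rcons h (s, a)) s')
  end.

Definition J (P : S -> A -> S -> R) (c : S -> A -> R) (gamma : R) (V : S -> R)
    (pi : policy) (H : nat) (s0 : S) : R :=
  Jrec P c gamma V pi H [::] s0.

Definition value (P : S -> A -> S -> R) (c : S -> A -> R) (gamma : R)
    (pi : policy) (s : S) : R :=
  limn (fun n => J P c gamma (fun _ => 0) pi n s).

Definition optimal_policy (P : S -> A -> S -> R) (c : S -> A -> R) (gamma : R)
    (pistar : policy) : Prop :=
  is_policy pistar /\
  forall pi, is_policy pi -> forall s, value P c gamma pistar s <= value P c gamma pi s.

End MDP.

(* Main.v *)
Require Import Defs.
From mathcomp Require Import all_boot all_order all_algebra.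
From mathcomp Require Import all_classical all_reals all_analysis ring lra.
Import Order.TTheory GRing.Theory Num.Theory numFieldNormedType.Exports.
Local Open Scope ring_scope.

Section Helpers.
Set Implicit Arguments.
Lemma convex_bound (R : realType) (T : finType) (w f : T -> R) (l u : R) :
  (forall i, 0 <= w i) -> \sum_i w i = 1 -> (forall i, l <= f i <= u) ->
  l <= \sum_i w i * f i <= u.
Proof.
move=> Hw Hs Hf; apply/andP; split.
- have -> : l = \sum_i w i * l by rewrite -mulr_suml Hs mul1r.
  apply: ler_sum => i _; apply: ler_wpM2l => //; by case/andP: (Hf i).
- have -> : u = \sum_i w i * u by rewrite -mulr_suml Hs mul1r.
  apply: ler_sum => i _; apply: ler_wpM2l => //; by case/andP: (Hf i).
Qed.

Lemma abs_convex (R : realType) (T : finType) (w f : T -> R) (E : R) :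
  (forall i, 0 <= w i) -> \sum_i w i = 1 -> (forall i, `|f i| <= E) ->
  `|\sum_i w i * f i| <= E.
Proof.
move=> Hw Hs Hf; apply: le_trans (ler_norm_sum _ _ _) _.
have -> : E = \sum_i w i * E by rewrite -mulr_suml Hs mul1r.
apply: ler_sum => i _; rewrite normrM ger0_norm //; exact: ler_wpM2l.
Qed.

Lemma diff_bound (R : realType) (T : finType) (d f : T -> R) (l u alpha : R) :
  \sum_i d i = 0 -> \sum_i `|d i| <= alpha -> l <= u ->
  (forall i, l <= f i <= u) ->
  `|\sum_i d i * f i| <= alpha * ((u - l) / 2).
Proof.
move=> Hd Ha Hlu Hf.
have -> : \sum_i d i * f i = \sum_i d i * (f i - (l + u) / 2).
  transitivity (\sum_i (d i * f i - d i * ((l + u) / 2))).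
    by rewrite sumrB -mulr_suml Hd mul0r subr0.
  by apply: eq_bigr => i _; rewrite mulrBr.
apply: le_trans (ler_norm_sum _ _ _) _.
apply: (@le_trans _ _ (\sum_i `|d i| * ((u - l) / 2))).
  apply: ler_sum => i _; rewrite normrM; apply: ler_wpM2l => //.
  rewrite ler_norml; case/andP: (Hf i) => H1 H2; apply/andP; split; lra.
rewrite -mulr_suml; apply: ler_wpM2r => //; lra.
Qed.

Definition gs {R : realType} (gamma : R) (n : nat) := \sum_(i < n) gamma ^+ i.

Lemma gsS (R : realType) (gamma : R) (n : nat) : gs gamma n.+1 = 1 + gamma * gs gamma n.
Proof.
rewrite /gs big_ord_recl expr0 mulr_sumr; congr (_ + _).
by apply: eq_bigr => i _; rewrite /bump /= exprS.
Qed.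

Lemma gs0 (R : realType) (gamma : R) : gs gamma 0 = 0.
Proof. by rewrite /gs big_ord0. Qed.

Lemma gs_ge0 (R : realType) (gamma : R) (n : nat) : 0 <= gamma -> 0 <= gs gamma n.
Proof. move=> g0; apply: sumr_ge0 => i _; exact: exprn_ge0. Qed.

Lemma gs_closed (R : realType) (gamma : R) (n : nat) : gamma < 1 ->
  (1 - gamma ^+ n) / (1 - gamma) = gs gamma n.
Proof.
move=> g1.
have Hn : gs gamma n * (1 - gamma) = 1 - gamma ^+ n.
  elim: n => [|n IH]; first by rewrite gs0 expr0 mul0r subrr.
  rewrite gsS exprS; transitivity ((1 - gamma) + gamma * (gs gamma n * (1 - gamma))); first by ring.
  by rewrite IH; ring.
rewrite -Hn mulfK //; lra.
Qed.
End Helpers.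
Lemma J_range (R : realType) (S A : finType) (P : S -> A -> S -> R) (c : S -> A -> R)
  (gamma : R) (V : S -> R) (pi : policy R S A) (cmin cmax Vmin Vmax : R) :
  is_kernel P -> is_policy pi -> 0 <= gamma ->
  (forall s a, cmin <= c s a <= cmax) -> (forall s, Vmin <= V s <= Vmax) ->
  forall n h s, cmin * gs gamma n + gamma ^+ n * Vmin <= Jrec P c gamma V pi n h s
                <= cmax * gs gamma n + gamma ^+ n * Vmax.
Proof.
move=> HP Hpi g0 Hc HV; elim=> [|n IH] h s /=.
  by rewrite gs0 expr0 !mulr0 !add0r !mul1r.
have [Hpi0 Hpi1] := Hpi h s.
apply: convex_bound => // a.
have [HP0 HP1] := HP s a.
have /andP [L U] := @convex_bound _ _ _ (fun s' => Jrec P c gamma V pi n (rcons h (s, a)) s') _ _ HP0 HP1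
   (IH (rcons h (s, a))).
case/andP: (Hc s a) => c1 c2.
rewrite gsS exprS; apply/andP; split; nra.
Qed.

Lemma D_bound (R : realType) (S A : finType) (P Phat : S -> A -> S -> R) (c chat : S -> A -> R)
  (gamma alpha : R) (V : S -> R) (pi : policy R S A) (cmin cmax Vmin Vmax : R) :
  0 <= gamma -> is_kernel P -> is_kernel Phat ->
  (forall s a, \sum_(s' : S) `|Phat s a s' - P s a s'| <= alpha) ->
  (forall s a, `|chat s a - c s a| <= alpha) ->
  is_policy pi -> 0 <= alpha -> cmin <= cmax -> Vmin <= Vmax ->
  (forall s a, cmin <= c s a <= cmax) -> (forall s, Vmin <= V s <= Vmax) ->
  forall n h s,
  `| Jrec P c gamma V pi n h s - Jrec Phat chat gamma V pi n h s |
   <= alpha * gs gamma n + alpha * n%:R * gamma ^+ n * ((Vmax - Vmin) / 2)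
      + alpha * n%:R * (gamma * gs gamma n.-1) * ((cmax - cmin) / 2).
Proof.
move=> g0 HP HPh Ha Hca Hpi a0 Hc12 HV12 Hc HV.
have gsb : forall m, gamma * gs gamma m.-1 <= gs gamma m.
  by case=> [|m] /=; rewrite ?gs0 ?mulr0 // gsS; lra.
elim=> [|n IH] h s /=.
  by rewrite subrr normr0 gs0 !mulr0 !mul0r !addr0.
have [Hpi0 Hpi1] := Hpi h s.
rewrite -sumrB.
set E := alpha + gamma * (alpha * (gs gamma n * ((cmax - cmin) / 2) + gamma ^+ n * ((Vmax - Vmin) / 2))
   + (alpha * gs gamma n + alpha * n%:R * gamma ^+ n * ((Vmax - Vmin) / 2)
      + alpha * n%:R * (gamma * gs gamma n.-1) * ((cmax - cmin) / 2))).
apply: (@le_trans _ _ E); last first.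
  rewrite /E gsS exprS -[n.+1]addn1 natrD.
  have X0 : 0 <= (cmax - cmin) / 2 by lra.
  have Y0 : 0 <= (Vmax - Vmin) / 2 by lra.
  have gn0 := @gs_ge0 _ gamma n g0.
  have gp0 : 0 <= gamma ^+ n by exact: exprn_ge0.
  have := gsb n; set G := gs gamma n.-1 => gsbn.
  set g := gs gamma n; set X := (cmax - cmin) / 2; set Y := (Vmax - Vmin) / 2.
  set gn := gamma ^+ n; set N := n%:R.
  have N0 : 0 <= N by rewrite /N ler0n.
  have : alpha * N * gamma * X * (gamma * G) <= alpha * N * gamma * X * g.
    apply: ler_wpM2l => //; rewrite !mulr_ge0 //; lra.
  move=> HH; nra.
under eq_bigr => a _ do rewrite -mulrBr.
apply: abs_convex => // a.
have [HP0 HP1] := HP s a.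
have [HPh0 HPh1] := HPh s a.
set Jn := fun s' => Jrec P c gamma V pi n (rcons h (s, a)) s'.
set Jh := fun s' => Jrec Phat chat gamma V pi n (rcons h (s, a)) s'.
have E1 : \sum_s' P s a s' * Jn s' - \sum_s' Phat s a s' * Jh s' =
   - \sum_s' (Phat s a s' - P s a s') * Jn s' + \sum_s' Phat s a s' * (Jn s' - Jh s').
  rewrite -sumrB -sumrN -big_split /=; apply: eq_bigr => s' _; ring.
have T1 : `|\sum_s' (Phat s a s' - P s a s') * Jn s'| <=
   alpha * ((cmax * gs gamma n + gamma ^+ n * Vmax - (cmin * gs gamma n + gamma ^+ n * Vmin)) / 2).
  apply: diff_bound => //.
  - by rewrite sumrB HP1 HPh1 subrr.
  - have := @gs_ge0 _ gamma n g0; have := exprn_ge0 n g0; nra.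
  - move=> s'; rewrite /Jn; exact: (@J_range _ _ _ P c gamma V pi cmin cmax Vmin Vmax HP Hpi g0 Hc HV n).
have T2 : `|\sum_s' Phat s a s' * (Jn s' - Jh s')| <=
   alpha * gs gamma n + alpha * n%:R * gamma ^+ n * ((Vmax - Vmin) / 2)
      + alpha * n%:R * (gamma * gs gamma n.-1) * ((cmax - cmin) / 2).
  apply: abs_convex => // s'; exact: IH.
have T3 : `|(c s a + gamma * \sum_s' P s a s' * Jn s') - (chat s a + gamma * \sum_s' Phat s a s' * Jh s')|
   <= `|chat s a - c s a| + gamma * (`|\sum_s' (Phat s a s' - P s a s') * Jn s'| +
          `|\sum_s' Phat s a s' * (Jn s' - Jh s')|).
  have -> : (c s a + gamma * \sum_s' P s a s' * Jn s') - (chat s a + gamma * \sum_s' Phat s a s' * Jh s')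
     = - (chat s a - c s a) + gamma * (\sum_s' P s a s' * Jn s' - \sum_s' Phat s a s' * Jh s') by ring.
  rewrite E1; apply: le_trans (ler_normD _ _) _; rewrite normrN; apply: lerD => //.
  rewrite normrM ger0_norm //; apply: ler_wpM2l => //.
  by apply: le_trans (ler_normD _ _) _; rewrite normrN.
apply: le_trans T3 _; rewrite /E; apply: lerD; first exact: Hca.
apply: ler_wpM2l => //; apply: lerD => //.
apply: le_trans T1 _; rewrite le_eqVlt; apply/orP; left; apply/eqP; congr (_ * _); by field.
Qed.

Theorem mainTheorem2 (R : realType) (S A : finType)
  (P Phat : S -> A -> S -> R) (c chat : S -> A -> R) (gamma alpha : R)
  (pistar : policy R S A) (Vmin Vmax cmin cmax : R) (H : nat) (pi : policy R S A) :
  0 <= gamma -> gamma < 1 ->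
  is_kernel P -> is_kernel Phat ->
  (forall s a, \sum_(s' : S) `|Phat s a s' - P s a s'| <= alpha) ->
  (forall s a, `|chat s a - c s a| <= alpha) ->
  optimal_policy P c gamma pistar ->
  (forall s, Vmin <= value P c gamma pistar s <= Vmax) ->
  (forall s a, cmin <= c s a <= cmax) ->
  (1 <= H)%N ->
  is_policy pi ->
  forall s0 : S,
    `| J P c gamma (value P c gamma pistar) pi H s0
       - J Phat chat gamma (value P c gamma pistar) pi H s0 |
    <= gamma * ((1 - gamma ^+ H.-1) / (1 - gamma)) * alpha * H%:R * ((cmax - cmin) / 2)
       + gamma ^+ H * alpha * H%:R * ((Vmax - Vmin) / 2)
       + (1 - gamma ^+ H) / (1 - gamma) * alpha.
Proof.
move=> g0 g1 HP HPh Ha Hca _ HV Hc _ Hpi s0.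
have [_ Hs1] := Hpi [::] s0.
have [a0 _] : exists a : A, true.
  case: (pickP (@predT A)) => [a0 _|Hn]; first by exists a0.
  by move: Hs1; rewrite big_pred0 // => /eqP; rewrite eq_sym oner_eq0.
have al0 : 0 <= alpha by apply: le_trans (Hca s0 a0).
have Hc12 : cmin <= cmax by case/andP: (Hc s0 a0) => ? ?; lra.
have HV12 : Vmin <= Vmax by case/andP: (HV s0) => ? ?; lra.
apply: le_trans (@D_bound _ _ _ P Phat c chat gamma alpha _ pi cmin cmax Vmin Vmax
   g0 HP HPh Ha Hca Hpi al0 Hc12 HV12 Hc HV H [::] s0) _.
rewrite !gs_closed // le_eqVlt; apply/orP; left; apply/eqP; ring.
Qed.
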